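(* Let $G=(V,E)$ be a directed unweighted graph with diameter $D=3h+z$, where $h\ge0$, $z\in\{0,1,2\}$, let $\Delta\ge1$, and let $\tilde h\ge h$ be an integer. Let $\hat D$ be the output of Approx-Diam-Sparse$(G,\tilde h)$. Then $2h+z\le\hat D\le D$.
   Context: $d(u,v)$ is the shortest-path distance from $u$ to $v$; $d^{\mathrm{out}}(v)=\max_u d(v,u)$, $d^{\mathrm{in}}(v)=\max_u d(u,v)$; $B^{\mathrm{out}}(v,r)=\{u:d(v,u)\le r\}$; for $H\subseteq V$, $d(v,H)=\min_{u\in H}d(v,u)$ ($=\infty$ if $H=\emptyset$). Approx-Diam-Sparse$(G,\tilde h)$ with parameter $\Delta$: let $H$ be the set of vertices of outdegree at least $\Delta$; compute $d^{\mathrm{out}}(x)$ for every $x\in H$; compute $d(v,H)$ for all $v$ and pick $w$ maximizing $d(w,H)$; compute $d^{\mathrm{out}}(w)$; let $h'=\min\{\tilde h+1,d(w,H)\}$ and compute $d^{\mathrm{in}}(v)$ for every $v\in B^{\mathrm{out}}(w,h')$; output $\hat D=\max\big(\max_{x\in H}d^{\mathrm{out}}(x),\,d^{\mathrm{out}}(w),\,\max_{v\in B^{\mathrm{out}}(w,h')}d^{\mathrm{in}}(v)\big)$. *)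

(* Defs.v *)
From mathcomp Require Import all_boot.
Set Implicit Arguments. Unset Strict Implicit. Unset Printing Implicit Defensive.

Section Graph.
Variables (T : finType) (e : rel T).

Definition walk (u v : T) (n : nat) : bool :=
  [exists p : n.-tuple T, path e u p && (last u p == v)].

(* shortest-path distance d(u,v): least n with a walk of length n.
   Shortest walks have < #|T| edges, so searching 0..#|T|-1 is exhaustive;
   the value #|T| is returned when v is unreachable from u. *)
Definition dist (u v : T) : nat := find (walk u v) (iota 0 #|T|).

Definition dout (v : T) : nat := \max_(u : T) dist v u.
Definition din (v : T) : nat := \max_(u : T) dist u v.
Definition diameter : nat := \max_(u : T) \max_(v : T) dist u v.

Definition ball_out (v : T) (r : nat) : {set T} := [set u | dist v u <= r].

(* d(v,H) = min_{x in H} d(v,x); only meaningful for H nonempty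
   (the empty case, d = infinity, is treated separately below). *)
Definition dist_set (v : T) (H : {set T}) : nat :=
  \big[minn/#|T|]_(x in H) dist v x.

Definition heavy (Delta : nat) : {set T} :=
  [set x | Delta <= #|[set y | e x y]|].

(* output of Approx-Diam-Sparse(G, ht) with parameter Delta, given the
   chosen vertex w (any maximizer of d(w,H)) *)
Definition approx_diam_sparse (Delta ht : nat) (w : T) : nat :=
  let H := heavy Delta in
  let h' := if H == set0 then ht.+1 else minn ht.+1 (dist_set w H) in
  maxn (maxn (\max_(x in H) dout x) (dout w))
       (\max_(v in ball_out w h') din v).

End Graph.

(* Main.v *)
Require Import Defs.
From mathcomp Require Import all_boot.
From mathcomp Require Import zify.
Set Implicit Arguments. Unset Strict Implicit. Unset Printing Implicit Defensive.

Section L.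
Variables (T : finType) (e : rel T).

Lemma walkP u v n :
  reflect (exists p : seq T, [/\ size p = n, path e u p & last u p = v])
          (walk e u v n).
Proof.
apply: (iffP existsP).
  move=> [p /andP[hp /eqP hl]]; exists (val p); split => //; exact: size_tuple.
move=> [p [hs hp hl]]; subst n.
exists (in_tuple p); by rewrite /= hp hl eqxx.
Qed.

Lemma walk_cat u v w n m : walk e u v n -> walk e v w m -> walk e u w (n + m).
Proof.
move=> /walkP[p [hs hp hl]] /walkP[q [hs' hq hl']]; apply/walkP.
exists (p ++ q); rewrite size_cat cat_path last_cat hl hs hs' hp hq; split => //.
Qed.

Lemma walk_split u v n k : walk e u v n -> k <= n ->
  exists y, walk e u y k /\ walk e y v (n - k).
Proof.
move=> /walkP[p [hs hp hl]] hk.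
exists (last u (take k p)); split; apply/walkP.
  exists (take k p); split => //; first by rewrite size_takel ?hs.
  by move: hp; rewrite -{1}(cat_take_drop k p) cat_path => /andP[].
exists (drop k p); split; first by rewrite size_drop hs.
  by move: hp; rewrite -{1}(cat_take_drop k p) cat_path => /andP[].
by rewrite -hl -[in RHS](cat_take_drop k p) last_cat.
Qed.

Hypothesis hc : forall u v : T, connect e u v.

Lemma short_walk u v : exists2 n, n < #|T| & walk e u v n.
Proof.
have /connectP[p hp hl] := hc u v.
case: (shortenP hp) hl => p' hp' hu _ hl.
exists (size p').
  have := max_card (mem (u :: p')); rewrite (card_uniqP hu) /=; lia.
by apply/walkP; exists p'.
Qed.

Lemma dist_walk u v : walk e u v (dist e u v) /\ dist e u v < #|T|.
Proof.
have [n hn hw] := short_walk u v.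
have hh : has (walk e u v) (iota 0 #|T|).
  apply/hasP; exists n => //; by rewrite mem_iota.
have hf := hh; rewrite has_find size_iota in hf.
have := nth_find 0 hh; rewrite nth_iota // add0n => ->; split => //.
Qed.

Lemma dist_min u v n : walk e u v n -> dist e u v <= n.
Proof.
move=> hw; case: (ltnP n #|T|) => hn; last first.
  have [_ ?] := dist_walk u v; lia.
rewrite leqNgt; apply/negP => hlt.
have := before_find 0 hlt; rewrite nth_iota // add0n hw //.
Qed.

Lemma dist_tri u v w : dist e u w <= dist e u v + dist e v w.
Proof.
apply: dist_min; apply: walk_cat; [exact: (dist_walk u v).1 | exact: (dist_walk v w).1].
Qed.

Lemma dist_split u v k : k <= dist e u v ->
  exists y, dist e u y <= k /\ dist e y v <= dist e u v - k.
Proof.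
move=> hk; have [y [h1 h2]] := walk_split (dist_walk u v).1 hk.
by exists y; split; apply: dist_min.
Qed.

Lemma dist_set_le v (H : {set T}) x : x \in H -> dist_set e v H <= dist e v x.
Proof.
move=> hx; rewrite /dist_set.
have : x \in index_enum T by rewrite mem_index_enum.
elim: (index_enum T) => [|i r IH] //; rewrite inE big_cons.
case/orP => [/eqP<-|hr]; first by rewrite hx geq_minl.
case: (i \in H); last exact: IH.
exact: leq_trans (geq_minr _ _) (IH hr).
Qed.

Lemma dist_set_ex v (H : {set T}) : H != set0 -> exists2 x, x \in H & dist_set e v H = dist e v x.
Proof.
case/set0Pn => x0 hx0.
have : dist_set e v H = #|T| \/ exists2 x, x \in H & dist_set e v H = dist e v x.
  rewrite /dist_set.
  apply: (big_ind (fun r => r = #|T| \/ exists2 x, x \in H & r = dist e v x)).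
  - by left.
  - by move=> a b ha hb /=; rewrite /minn; case: ifP.
  - by move=> i hi; right; exists i.
case => // heq.
have := dist_set_le v hx0; have [_ ?] := dist_walk v x0; lia.
Qed.

Lemma dist_le_diam u v : dist e u v <= diameter e.
Proof.
rewrite /diameter; apply: leq_trans (leq_bigmax u).
exact: (leq_bigmax v).
Qed.

End L.

Theorem lemma9 (T : finType) (e : rel T) (Delta ht h z : nat) (w : T) :
  (forall u v : T, connect e u v) ->
  0 < Delta ->
  z < 3 ->
  diameter e = 3 * h + z ->
  h <= ht ->
  (forall v : T, dist_set e v (heavy e Delta) <= dist_set e w (heavy e Delta)) ->
  2 * h + z <= approx_diam_sparse e Delta ht w <= diameter e.
Proof.
move=> hc _ hz hD hh hw.
rewrite /approx_diam_sparse.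
set H := heavy e Delta.
set h' := if H == set0 then _ else _.
apply/andP; split; last first.
  rewrite !geq_max; apply/andP; split; [apply/andP; split|].
  - apply/bigmax_leqP => x _; apply/bigmax_leqP => u _; exact: dist_le_diam.
  - apply/bigmax_leqP => u _; exact: dist_le_diam.
  - apply/bigmax_leqP => x _; apply/bigmax_leqP => u _; exact: dist_le_diam.
have hT : 0 < #|T| by apply/card_gt0P; exists w.
have [a' ha] := eq_bigmax (fun u => \max_(v : T) dist e u v) hT.
have [b hb] := eq_bigmax (fun v => dist e a' v) hT.
have hab : dist e a' b = 3 * h + z by rewrite -hD /diameter ha hb.
set M := maxn (maxn _ _) _.
have hdout x : dist e x b <= dout e x by exact: (leq_bigmax b).
have hdin v : dist e a' v <= din e v by exact: (leq_bigmax (F := fun u => dist e u v) a').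
have hin v : dist e w v <= h' -> din e v <= M.
  move=> hv; apply: leq_trans (leq_maxr _ _).
  by apply: (leq_bigmax_cond (P := fun v => v \in ball_out e w h')); rewrite inE.
case: (boolP ((H != set0) && (dist_set e w H <= h))) => [/andP[hne hs] | hcase].
  have [x hx hax] := dist_set_ex hc a' hne.
  have hax' : dist e a' x <= h by rewrite -hax; apply: leq_trans (hw a') hs.
  have := dist_tri hc a' x b.
  have := hdout x.
  have : dout e x <= M.
    apply: leq_trans (leq_maxl _ _); apply: leq_trans (leq_maxl _ _).
    exact: (leq_bigmax_cond (P := fun x => x \in H)).
  lia.
have hh' : h.+1 <= h'.
  rewrite /h'; case: ifP => hE; first lia.
  move: hcase; rewrite hE /= -ltnNge => hlt; rewrite leq_min; lia.
case: (leqP (dist e w b) h.+1) => hwb.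
  have := hin b (leq_trans hwb hh'); have := hdin b; lia.
have hdw : dout e w <= M by apply: leq_trans (leq_maxl _ _); exact: leq_maxr.
have := hdout w.
have [y [hy1 hy2]] := dist_split hc (ltnW hwb).
have := hin y (leq_trans hy1 hh'); have := hdin y; have := dist_tri hc a' y b.
lia.
Qed.
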